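(* If $G$ is a finite nonabelian group, then $Z_{K(G)}=\bigcap_{\psi\in\mathcal{X}}Z(\psi)$.
   Context: For $\chi\in\mathrm{Irr}(G)$, the center of $\chi$ is $Z(\chi)=\{g\in G : |\chi(g)|=\chi(1)\}$. Let $\mathcal{X}=\{\chi\in\mathrm{Irr}(G) : Z(\chi)>Z(G)\}$ (strict containment) and $K(G)=\bigcap_{\chi\in\mathcal{X}}\ker(\chi)$. For a normal subgroup $N$ of $G$, $Z_N$ is defined by $Z_N/N=Z(G/N)$. *)

(* Defs.v *)
From mathcomp Require Import all_boot all_order all_algebra all_fingroup all_solvable all_field all_character.
Set Implicit Arguments. Unset Strict Implicit. Unset Printing Implicit Defensive.
Import GRing.Theory Num.Theory.
Local Open Scope ring_scope.

Definition chi_center (gT : finGroupType) (G : {group gT}) (chi : 'CF(G)) : {set gT} :=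
  [set g in G | `|chi g| == chi 1%g].

Definition calX (gT : finGroupType) (G : {group gT}) : {set Iirr G} :=
  [set i : Iirr G | ('Z(G) \proper chi_center 'chi_i)%g].

(* K(G) = intersection of the kernels of chi in X (equal to G if X is empty). *)
Definition KG (gT : finGroupType) (G : {group gT}) : {set gT} :=
  (G :&: \bigcap_(i in calX G) cfker 'chi[G]_i)%g.

(* Z_N, defined by Z_N / N = Z(G / N): the full preimage of Z(G/N). *)
Definition ZN (gT : finGroupType) (G : {group gT}) (N : {set gT}) : {set gT} :=
  (coset N @*^-1 'Z(G / N))%g.

(* Main.v *)
Require Import Defs.
From mathcomp Require Import all_boot all_order all_algebra all_fingroup all_solvable all_field all_character.
Local Open Scope ring_scope.
Set Implicit Arguments. Unset Strict Implicit.
Import GRing.Theory Num.Theory.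

Lemma zq (gT : finGroupType) (N G : {group gT}) g :
  (N <| G)%g -> g \in G -> (coset N g \in 'Z(G / N))%g = ([~: <[g]>, G] \subset N)%g.
Proof.
move=> nN Gg; have nNG := normal_norm nN.
have nNg : g \in 'N(N)%g by apply: (subsetP nNG).
rewrite /center inE mem_quotient //= -cycle_subG -quotient_cycle //.
by rewrite quotient_cents2 // cycle_subG.
Qed.

Lemma zchi (gT : finGroupType) (G : {group gT}) (i : Iirr G) g :
  g \in G -> (g \in chi_center 'chi_i) = ([~: <[g]>, G] \subset cfker 'chi_i)%g.
Proof.
move=> Gg.
have -> : chi_center 'chi_i = ('Z('chi_i))%CF by rewrite /cfcenter irr_char.
rewrite -zq ?cfker_normal // -cfcenter_eq_center.
rewrite -{1}(quotientGK (cfker_center_normal 'chi_i)) inE /=.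
rewrite (subsetP (normal_norm (cfker_normal ('chi_i)))) //.
by rewrite inE.
Qed.

Theorem lemma3p9 (gT : finGroupType) (G : {group gT}) :
  ~~ abelian G ->
  ZN G (KG G) = (G :&: \bigcap_(i in calX G) chi_center 'chi[G]_i)%g.
Proof.
move=> _.
set K := KG G.
have KGE : K = (G :&: \bigcap_(i in calX G) cfker 'chi[G]_i)%G by [].
rewrite /ZN KGE.
set KK := (G :&: _)%G.
have nK : (KK <| G)%g.
  rewrite /normal subsetIl normsI ?normG //.
  by apply/norms_bigcap/bigcapsP => i _; apply: normal_norm; apply: cfker_normal.
apply/setP => g.
case Gg: (g \in G); last first.
  rewrite [in RHS]inE Gg /=; apply/negbTE; apply: contraFN Gg => Hg.
  rewrite -(quotientGK nK); apply: subsetP Hg.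
  by apply: morphpreS; apply: center_sub.
have nKg : g \in 'N(KK)%g by rewrite (subsetP (normal_norm nK)).
have -> : (g \in coset KK @*^-1 'Z(G / KK))%g = (coset KK g \in 'Z(G / KK))%g.
  by apply/morphpreP/idP => [[]|] //.
rewrite [in RHS]inE Gg /= zq //.
rewrite subsetI commg_subr ?cycle_subG ?Gg ?normG //=.
rewrite (subsetP (normG G)) //=.
apply/bigcapsP/bigcapP => H i Xi; first by rewrite zchi // H.
by rewrite -zchi // H.
Qed.
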